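(* Let $\mathbf{u}$ be quasi-definite with SMOP $(P_n)$ satisfying $xP_n=P_{n+1}+b_nP_n+a_nP_{n-1}$, monic Jacobi matrix $J$, and let $c\in\mathbb{C}$ with $P_n(c)\ne0$ for all $n$. Set $\beta_n=-P_{n+1}(c)/P_n(c)$ ($n\ge0$) and $\ell_n=-a_nP_{n-1}(c)/P_n(c)$ ($n\ge1$), so that $J-cI=LU$ with $L$ lower bidiagonal (diagonal $1$, subdiagonal $\ell_1,\ell_2,\dots$) and $U$ upper bidiagonal (diagonal $\beta_0,\beta_1,\dots$, superdiagonal $1$). Let $J_\alpha$ be the monic Jacobi matrix of the polynomials $R_n(x)=\frac{\mathbf{u}_0}{\widetilde{\mathbf{u}}_0}[(x-c)P^{(1)}_n(x)-P_{n+1}(x)]$, where $\widetilde{\mathbf{u}}=(x-c)\mathbf{u}$, and let $\widetilde J^{(1)}$ be the monic Jacobi matrix of the associated polynomials of the first kind $(\widetilde P^{(1)}_n)$ of $\widetilde{\mathbf{u}}$. Let $L_1$ be the lower bidiagonal matrix with diagonal $1$ and subdiagonal $\ell_2,\ell_3,\dots$, and $U_1$ the upper bidiagonal matrix with diagonal $\beta_1,\beta_2,\dots$ and superdiagonal $1$ (i.e. $L_1=\Lambda L\Lambda^\top$, $U_1=\Lambda U\Lambda^\top$, $\Lambda$ the shift matrix with $\Lambda_{i,i+1}=1$ and zeros elsewhere). Then $$J_\alpha-cI=L_1U_1,\qquad \widetilde J^{(1)}-cI=U_1L_1.$$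
   Context: Quasi-definite: all leading principal Hankel minors of the moments nonzero; SMOP = sequence of monic orthogonal polynomials with $xP_n=P_{n+1}+b_nP_n+a_nP_{n-1}$, $P_{-1}=0,P_0=1$, $a_n\neq0$. The monic Jacobi matrix of a sequence satisfying such a recurrence is the semi-infinite tridiagonal matrix with diagonal $(b_0,b_1,\dots)$, superdiagonal entries $1$ and subdiagonal $(a_1,a_2,\dots)$. Associated polynomials of the first kind: monic, $xP^{(1)}_n=P^{(1)}_{n+1}+b_{n+1}P^{(1)}_n+a_{n+1}P^{(1)}_{n-1}$, $P^{(1)}_{-1}=0,P^{(1)}_0=1$. $\langle(x-c)\mathbf{u},p\rangle=\langle\mathbf{u},(x-c)p\rangle$, $\widetilde{\mathbf{u}}_0=\langle\widetilde{\mathbf{u}},1\rangle$. *)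

(* Defs.v *)
(* Scalars: an arbitrary numClosedFieldType C (e.g. algC, or
   complex R for R : rcfType), standing in for the complex numbers. *)
From HB Require Import structures.
From mathcomp Require Import all_boot all_order all_algebra.
Set Implicit Arguments. Unset Strict Implicit. Unset Printing Implicit Defensive.
Import Order.TTheory GRing.Theory Num.Theory.
Local Open Scope ring_scope.

Section Defs.
Variable C : numClosedFieldType.

Definition mfun (m : nat -> C) (p : {poly C}) : C :=
  \sum_(i < size p) p`_i * m i.

Definition mulfun (c : C) (L : {poly C} -> C) (p : {poly C}) : C :=
  L (('X - c%:P) * p).

Definition quasi_definite (m : nat -> C) : Prop :=
  forall n : nat, \det (\matrix_(i < n.+1, j < n.+1) m (i + j)%N) != 0.

Definition is_SMOP (L : {poly C} -> C) (P : nat -> {poly C}) : Prop :=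
  forall n : nat,
    [/\ P n \is monic, size (P n) = n.+1,
        (forall k : nat, k != n -> L (P n * P k) = 0) & L (P n * P n) != 0].

Definition TTRR (P : nat -> {poly C}) (b a : nat -> C) : Prop :=
  [/\ P 0%N = 1,
      'X * P 0%N = P 1%N + b 0%N *: P 0%N,
      (forall n : nat, 'X * P n.+1 = P n.+2 + b n.+1 *: P n.+1 + a n.+1 *: P n)
    & (forall n : nat, a n.+1 != 0)].

(* The monic polynomial sequence generated by the recurrence with
   coefficients b, a : returns (P_{n-1}, P_n). *)
Fixpoint mpair (b a : nat -> C) (n : nat) : {poly C} * {poly C} :=
  match n with
  | 0%N => (0, 1)
  | k.+1 => let pq := mpair b a k in
            (pq.2, ('X - (b k)%:P) * pq.2 - a k *: pq.1)
  end.

Definition assoc1 (b a : nat -> C) (n : nat) : {poly C} :=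
  (mpair (fun k => b k.+1) (fun k => a k.+1) n).2.

(* Semi-infinite matrices are functions nat -> nat -> C (0-based indices). *)
Definition infmx := nat -> nat -> C.

Definition idmx : infmx := fun i j => (i == j)%:R.

Definition jacobi (b a : nat -> C) : infmx := fun i j =>
  if i == j then b i else if j == i.+1 then 1 else if i == j.+1 then a i else 0.

(* Lower bidiagonal with diagonal 1 and subdiagonal (s_0, s_1, ...):
   entry (j+1, j) is s j. *)
Definition lbidiag (s : nat -> C) : infmx := fun i j =>
  if i == j then 1 else if i == j.+1 then s j else 0.

Definition ubidiag (d : nat -> C) : infmx := fun i j =>
  if i == j then d i else if j == i.+1 then 1 else 0.

(* Product of semi-infinite matrices A B, where A i k = 0 for k > i+1
   (true for all bidiagonal/tridiagonal matrices here); then the sum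
   sum_k A i k B k j is exactly the finite sum over k <= i+1. *)
Definition bandmul (A B : infmx) : infmx := fun i j =>
  \sum_(k < i.+2) A i k * B k j.

Definition beta (P : nat -> {poly C}) (c : C) (n : nat) : C :=
  - (P n.+1).[c] / (P n).[c].
Definition ell (P : nat -> {poly C}) (a : nat -> C) (c : C) (n : nat) : C :=
  - (a n * (P n.-1).[c]) / (P n).[c].

End Defs.

(* Main.v *)
Require Import Defs.
From HB Require Import structures.
From mathcomp Require Import all_boot all_order all_algebra.
From mathcomp Require Import ring zify.
Set Implicit Arguments. Unset Strict Implicit. Unset Printing Implicit Defensive.
Import Order.TTheory GRing.Theory Num.Theory.
Local Open Scope ring_scope.


Lemma mfunE (C : numClosedFieldType) (m : nat -> C) (p : {poly C}) N :
  (size p <= N)%N -> mfun m p = \sum_(i < N) p`_i * m i.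
Proof.
move=> hN; rewrite /mfun (big_ord_widen _ (fun i => p`_i * m i) hN) big_mkcond /=.
apply: eq_bigr => i _; case: ifP => // /negbT; rewrite -leqNgt => h.
by rewrite nth_default // mul0r.
Qed.

Lemma mfunD (C : numClosedFieldType) (m : nat -> C) (p q : {poly C}) :
  mfun m (p + q) = mfun m p + mfun m q.
Proof.
set N := maxn (size p) (size q).
rewrite (mfunE m (size_polyD p q)) (@mfunE _ m p N) ?leq_maxl //
  (@mfunE _ m q N) ?leq_maxr // -big_split /=.
by apply: eq_bigr => i _; rewrite coefD mulrDl.
Qed.

Lemma mfunZ (C : numClosedFieldType) (m : nat -> C) (x : C) (p : {poly C}) :
  mfun m (x *: p) = x * mfun m p.
Proof.
rewrite (mfunE m (size_scale_leq x p)) /mfun mulr_sumr.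
by apply: eq_bigr => i _; rewrite coefZ mulrA.
Qed.

Lemma mfun0 (C : numClosedFieldType) (m : nat -> C) : mfun m 0 = 0.
Proof. by rewrite /mfun size_poly0 big_ord0. Qed.

Lemma mfunB (C : numClosedFieldType) (m : nat -> C) (p q : {poly C}) :
  mfun m (p - q) = mfun m p - mfun m q.
Proof. by rewrite mfunD -scaleN1r mfunZ mulN1r. Qed.

Lemma mfun1 (C : numClosedFieldType) (m : nat -> C) : mfun m 1 = m 0%N.
Proof. by rewrite /mfun size_poly1 big_ord1 coef1 mul1r. Qed.

Lemma size_sub_monic (C : numClosedFieldType) (p q : {poly C}) n :
  p \is monic -> q \is monic -> size p = n.+1 -> size q = n.+1 ->
  (size (p - q)%R <= n)%N.
Proof.
move=> mp mq sp sq; apply/leq_sizeP => j hj.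
rewrite coefB; case: (ltngtP n j) => [hlt|hlt|<-].
- by rewrite !nth_default ?subr0 // ?sp ?sq.
- by rewrite leqNgt hlt in hj.
move: mp mq; rewrite !qualifE /= !lead_coefE sp sq /= => /eqP -> /eqP ->.
by rewrite subrr.
Qed.

Lemma orthP (C : numClosedFieldType) (m : nat -> C) (P : nat -> {poly C}) n :
  is_SMOP (mfun m) P -> forall p : {poly C}, (size p <= n)%N -> mfun m (P n * p) = 0.
Proof.
move=> hS; suff: forall N (p : {poly C}), (N <= n)%N -> (size p <= N)%N -> mfun m (P n * p) = 0.
  by move=> h p hp; exact: (h n).
elim=> [|N IH] p hN hp.
  by move: hp; rewrite leqn0 size_poly_eq0 => /eqP ->; rewrite mulr0 mfun0.
have [mN sN _ _] := hS N.
have -> : p = (p - p`_N *: P N) + p`_N *: P N by rewrite subrK.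
rewrite mulrDr mfunD -scalerAr mfunZ.
have [_ _ ho _] := hS n.
rewrite ho; last by apply/eqP => e; move: hN; rewrite e ltnn.
rewrite mulr0 addr0 IH //; first exact: ltnW.
apply/leq_sizeP => j hj; rewrite coefB coefZ.
case: (ltngtP N j) => [hlt|hlt|<-].
- rewrite [(P N)`_j]nth_default ?sN // [p`_j]nth_default ?mulr0 ?subr0 //; exact: leq_trans hp hlt.
- by rewrite leqNgt hlt in hj.
move: mN; rewrite qualifE /= lead_coefE sN /= => /eqP ->.
by rewrite mulr1 subrr.
Qed.


Lemma eqSn i : (i.+1 == i) = false. Proof. by apply/eqP; lia. Qed.
Lemma eqnS i : (i == i.+1) = false. Proof. by apply/eqP; lia. Qed.
Lemma eqSSn i : (i.+2 == i) = false. Proof. by apply/eqP; lia. Qed.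
Lemma eqnSS i : (i == i.+2) = false. Proof. by apply/eqP; lia. Qed.

Lemma tri_ext (C : numClosedFieldType) (M N : infmx C) :
  (forall i j, ((i.+1 < j) || (j.+1 < i))%N -> M i j = 0) ->
  (forall i j, ((i.+1 < j) || (j.+1 < i))%N -> N i j = 0) ->
  (forall i, M i i = N i i) -> (forall i, M i i.+1 = N i i.+1) ->
  (forall i, M i.+1 i = N i.+1 i) -> forall i j, M i j = N i j.
Proof.
move=> hM hN hd hu hl i j.
case: (eqVneq j i) => [->//|n1]; case: (eqVneq j i.+1) => [->//|n2].
case: (eqVneq i j.+1) => [->//|n3].
have h : ((i.+1 < j) || (j.+1 < i))%N.
  by move: n1 n2 n3 => /eqP n1 /eqP n2 /eqP n3; apply/orP; lia.
by rewrite hM ?hN.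
Qed.

Lemma lu_far (C : numClosedFieldType) (s d : nat -> C) i k j :
  ((i.+1 < j) || (j.+1 < i))%N -> lbidiag s i k * ubidiag d k j = 0.
Proof.
move=> h; rewrite /lbidiag /ubidiag.
repeat case: eqP => ? //; subst; rewrite ?mul0r ?mulr0 //; lia.
Qed.

Lemma ul_far (C : numClosedFieldType) (s d : nat -> C) i k j :
  ((i.+1 < j) || (j.+1 < i))%N -> ubidiag d i k * lbidiag s k j = 0.
Proof.
move=> h; rewrite /lbidiag /ubidiag.
repeat case: eqP => ? //; subst; rewrite ?mul0r ?mulr0 //; lia.
Qed.

Lemma bandmul0 (C : numClosedFieldType) (A B : infmx C) j :
  bandmul A B 0 j = A 0%N 0%N * B 0%N j + A 0%N 1%N * B 1%N j.
Proof. by rewrite /bandmul !big_ord_recr big_ord0 /= add0r. Qed.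

Lemma bandmulS (C : numClosedFieldType) (A B : infmx C) i j :
  (forall k, (k < i)%N -> A i.+1 k = 0) ->
  bandmul A B i.+1 j = A i.+1 i * B i j + A i.+1 i.+1 * B i.+1 j
                       + A i.+1 i.+2 * B i.+2 j.
Proof.
move=> h; rewrite /bandmul !big_ord_recr /= big1 ?add0r // => k _.
by rewrite h ?mul0r.
Qed.

Lemma lbS (C : numClosedFieldType) (s : nat -> C) i k :
  (k < i)%N -> lbidiag s i.+1 k = 0.
Proof. move=> h; rewrite /lbidiag; repeat case: eqP => ? //; lia. Qed.
Lemma ubS (C : numClosedFieldType) (s : nat -> C) i k :
  (k < i)%N -> ubidiag s i.+1 k = 0.
Proof. move=> h; rewrite /ubidiag; repeat case: eqP => ? //; lia. Qed.

Lemma jac_far (C : numClosedFieldType) (b a : nat -> C) c i j :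
  ((i.+1 < j) || (j.+1 < i))%N -> jacobi b a i j - c * idmx C i j = 0.
Proof.
move=> h; rewrite /jacobi /idmx.
repeat case: eqP => ? //; subst; rewrite ?mulr0 ?subr0 //; lia.
Qed.


Theorem mainTheorem12 (C : numClosedFieldType) (m : nat -> C)
    (P : nat -> {poly C}) (b a : nat -> C) (c : C) :
  quasi_definite m ->
  is_SMOP (mfun m) P ->
  TTRR P b a ->
  (forall n : nat, (P n).[c] != 0) ->
  let ut := mulfun c (mfun m) in
  let R := fun n : nat =>
    (m 0%N / ut 1) *: (('X - c%:P) * assoc1 b a n - P n.+1) in
  let L1 := lbidiag (fun j => ell P a c j.+2) in
  let U1 := ubidiag (fun i => beta P c i.+1) in
  (exists ba aa : nat -> C,
      TTRR R ba aa /\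
      forall i j : nat, jacobi ba aa i j - c * idmx C i j = bandmul L1 U1 i j) /\
  (exists (Pt : nat -> {poly C}) (bt at_ : nat -> C),
      [/\ is_SMOP ut Pt, TTRR Pt bt at_ &
      forall i j : nat,
        jacobi (fun k => bt k.+1) (fun k => at_ k.+1) i j - c * idmx C i j
        = bandmul U1 L1 i j]).
Proof.
move=> _ hS [hP0 hP1 hPS ha] hc ut R L1 U1.
set be := beta P c; set el := ell P a c.
have P1E : P 1%N = 'X - (b 0%N)%:P.
  by move: hP1; rewrite hP0 mulr1 => ->; rewrite alg_polyC addrK.
have P2E : forall n, P n.+2 = 'X * P n.+1 - (b n.+1)%:P * P n.+1 - (a n.+1)%:P * P n.
  by move=> n; rewrite !mul_polyC hPS -!mul_polyC; ring.
have ev : forall n, (P n.+2).[c] = (c - b n.+1) * (P n.+1).[c] - a n.+1 * (P n).[c].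
  by move=> n; rewrite P2E !hornerE; ring.
have E0 : be 0%N = b 0%N - c.
  by rewrite /be /beta P1E hP0 !hornerE; field.
have E2 : forall n, el n.+1 + be n.+1 = b n.+1 - c.
  move=> n; rewrite /el /be /ell /beta ev /=; by field; apply: hc.
have E3 : forall n, el n.+1 * be n = a n.+1.
  move=> n0; rewrite /el /be /ell /beta /=; by field; rewrite ?hc.
have beN : forall n, be n != 0.
  by move=> n; rewrite /be /beta mulf_neq0 ?oppr_eq0 ?invr_eq0.
have elN : forall n, el n.+1 != 0.
  by move=> n; rewrite /el /ell mulf_neq0 ?oppr_eq0 ?invr_eq0 ?mulf_neq0.
have m0N : m 0%N != 0.
  by have [_ _ _] := hS 0%N; rewrite hP0 mulr1 mfun1.
have ut1 : ut 1 = (b 0%N - c) * m 0%N.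
  rewrite /ut /mulfun mulr1.
  have -> : 'X - c%:P = P 1%N * P 0%N + (b 0%N - c) *: (P 0%N * P 0%N).
    by rewrite hP0 !mulr1 P1E -mul_polyC polyCB; ring.
  have [_ _ h _] := hS 1%N.
  by rewrite mfunD h // mfunZ hP0 mulr1 mfun1 add0r.
set k := m 0%N / ut 1.
have hk : k * (b 0%N - c) = 1.
  rewrite /k ut1; have := beN 0%N; rewrite E0 => h; field; by rewrite m0N h.
have hb0 : b 0%N - c != 0 by rewrite -E0.
have hk' : k = (b 0%N - c)^-1 by rewrite -(mulfK hb0 k) hk mul1r.
have A0 : assoc1 b a 0 = 1 by [].
have A1 : assoc1 b a 1 = 'X - (b 1%N)%:P by rewrite /assoc1 /= scaler0 subr0 mulr1.
have AS : forall n, assoc1 b a n.+2 =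
    ('X - (b n.+2)%:P) * assoc1 b a n.+1 - (a n.+2)%:P * assoc1 b a n.
  by move=> n; rewrite /assoc1 /= mul_polyC.
have el1 : el 1%N = a 1%N * k.
  rewrite hk' /el /ell /= hP0 P1E !hornerE; field.
  by rewrite hb0 -oppr_eq0 opprB.
split.
  exists (fun i => if i is 0 then b 1%N - a 1%N * k else b i.+1), (fun i => a i.+1).
  have R0E : R 0%N = 1.
    rewrite /R /= -/k A0 mulr1 P1E.
    have -> : 'X - c%:P - ('X - (b 0%N)%:P) = (b 0%N - c)%:P by rewrite polyCB; ring.
    by rewrite -mul_polyC -polyCM hk.
  split.
    split => //.
    - rewrite R0E /R /= -/k A1 (P2E 0%N) P1E hP0.
      have -> : ('X - c%:P) * ('X - (b 1%N)%:P) - ('X * ('X - (b 0%N)%:P) -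
         (b 1%N)%:P * ('X - (b 0%N)%:P) - (a 1%N)%:P * 1)
         = (b 0%N - c)%:P * ('X - (b 1%N)%:P) + (a 1%N)%:P by rewrite polyCB; ring.
      rewrite -mul_polyC mulrDr mulrA -polyCM hk mul1r -mul_polyC !polyCB !polyCM; ring.
    - by move=> n; rewrite /R /= AS (P2E n.+1) -!mul_polyC; ring.
  have E2' : forall n, b n.+1 = el n.+1 + be n.+1 + c.
    by move=> n; rewrite E2 subrK.
  have tR : (true%:R : C) = 1 by [].
  have fR : (false%:R : C) = 0 by [].
  apply: tri_ext.
  - by move=> i j h; rewrite jac_far.
  - by move=> i j h; rewrite /bandmul big1 // => kk _; rewrite /L1 /U1 lu_far.
  - case=> [|i]; [rewrite bandmul0 | rewrite bandmulS; last by move=> kk hkk; rewrite /L1 lbS];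
    rewrite /L1 /U1 /lbidiag /ubidiag /jacobi /idmx /= -/el -/be;
    repeat (case: eqP => [?|?]; try lia); rewrite ?E2' ?el1 -?E3; rewrite ?tR ?fR; ring.
  - case=> [|i]; [rewrite bandmul0 | rewrite bandmulS; last by move=> kk hkk; rewrite /L1 lbS];
    rewrite /L1 /U1 /lbidiag /ubidiag /jacobi /idmx /= -/el -/be;
    repeat (case: eqP => [?|?]; try lia); rewrite ?E2' ?el1 -?E3 ?tR ?fR; ring.
  - move=> i; rewrite bandmulS; last by move=> kk hkk; rewrite /L1 lbS.
   
    rewrite /L1 /U1 /lbidiag /ubidiag /jacobi /idmx /= -/el -/be;
    repeat (case: eqP => [?|?]; try lia); rewrite ?E2' ?el1 -?E3 ?tR ?fR; ring.
set q := fun n => P n.+1 + be n *: P n.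
pose Pt := fun n => q n %/ ('X - c%:P).
have XcN : 'X - c%:P != 0 by rewrite polyXsubC_eq0.
have hK : forall n, ('X - c%:P) * Pt n = q n.
  move=> n; rewrite mulrC divpK // dvdp_XsubCl /root /q hornerD hornerZ /be /beta.
  by apply/eqP; field; apply: hc.
have sP : forall n, size (P n) = n.+1 by move=> n; have [] := hS n.
have mP : forall n, P n \is monic by move=> n; have [] := hS n.
have sq : forall n, size (q n) = n.+2.
  move=> n; rewrite /q size_polyDl sP //.
  by apply: leq_ltn_trans (size_scale_leq _ _) _; rewrite !sP.
have mq : forall n, q n \is monic.
  move=> n; rewrite /q qualifE /= lead_coefDl ?sP; first by have := mP n.+1; rewrite qualifE.
  by apply: leq_ltn_trans (size_scale_leq _ _) _; rewrite !sP.
have mPt : forall n, Pt n \is monic.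
  by move=> n; rewrite -(monicMl _ (monicXsubC c)) hK.
have sPt : forall n, size (Pt n) = n.+1.
  move=> n; have := sq n; rewrite -hK size_Mmonic // size_XsubC /=.
  by case.
have orthq : forall n (p : {poly C}), (size p <= n.+1)%N -> mfun m (q n * p) = be n * mfun m (P n * p).
  move=> n p hp; rewrite /q mulrDl mfunD orthP // add0r -scalerAl mfunZ //.
have orthK : forall n k, (k < n)%N -> ut (Pt n * Pt k) = 0.
  move=> n kk hkn; rewrite /ut /mulfun mulrA hK orthq; last by rewrite sPt ltnW.
  by rewrite (orthP hS) ?mulr0 // sPt.
have eb0 : b 0%N = be 0%N + c by rewrite E0 subrK.
have E2' : forall n, b n.+1 = el n.+1 + be n.+1 + c.
  by move=> n; rewrite E2 subrK.
have ea : forall n, a n.+1 = el n.+1 * be n by move=> n; rewrite E3.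
exists Pt, (fun n => c + be n + el n.+1), (fun n => be n * el n).
split.
- move=> n; split => //.
  + move=> kk hk2; case: (ltngtP kk n) => h.
    * exact: orthK.
    * by rewrite mulrC orthK.
    * by rewrite h eqxx in hk2.
  + rewrite /ut /mulfun mulrA hK orthq ?sPt //.
    have -> : Pt n = P n + (Pt n - P n) by rewrite addrC subrK.
    rewrite mulrDr mfunD [mfun m (P n * (_ - _))]orthP ?addr0 ?size_sub_monic //.
    by rewrite mulf_neq0 //; have [] := hS n.
- split.
  + apply: (mulfI XcN); rewrite hK /q mulr1 hP0 P1E E0 alg_polyC polyCB; ring.
  + apply: (mulfI XcN); rewrite mulrCA mulrDr -!scalerAr !hK /q hP0 (P2E 0%N) P1E.
    rewrite -!mul_polyC mulr1 eb0 E2' ea hP0 !polyCD !polyCM; ring.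
  + move=> n; apply: (mulfI XcN); rewrite mulrCA !mulrDr -!scalerAr !hK /q.
    rewrite (P2E n.+1) (P2E n) -!mul_polyC !E2' !ea !polyCD !polyCM; ring.
  + by move=> n; rewrite mulf_neq0.
- have tR : (true%:R : C) = 1 by [].
  have fR : (false%:R : C) = 0 by [].
  apply: tri_ext.
  + by move=> i j h; rewrite jac_far.
  + by move=> i j h; rewrite /bandmul big1 // => kk _; rewrite /L1 /U1 ul_far.
  + case=> [|i]; [rewrite bandmul0 | rewrite bandmulS; last by move=> kk hkk; rewrite /U1 ubS];
    rewrite /L1 /U1 /lbidiag /ubidiag /jacobi /idmx /= -/el -/be;
    repeat (case: eqP => [?|?]; try lia); rewrite ?tR ?fR; ring.
  + case=> [|i]; [rewrite bandmul0 | rewrite bandmulS; last by move=> kk hkk; rewrite /U1 ubS];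
    rewrite /L1 /U1 /lbidiag /ubidiag /jacobi /idmx /= -/el -/be;
    repeat (case: eqP => [?|?]; try lia); rewrite ?tR ?fR; ring.
  + move=> i; rewrite bandmulS; last by move=> kk hkk; rewrite /U1 ubS.
    rewrite /L1 /U1 /lbidiag /ubidiag /jacobi /idmx /= -/el -/be;
    repeat (case: eqP => [?|?]; try lia); rewrite ?tR ?fR; ring.
Qed.
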